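(* Let $\mathcal{M}=(W,R,V)$ be a Kripke model, $w_0\in W$, $\varphi_0$ a sentence of the modal $\mu$-calculus and $\Gamma$ an ordinal. Then every play of the $\Gamma$-bounded evaluation game $(\mathcal{M},w_0,\varphi_0,\Gamma)$ ends after finitely many rounds, i.e. reaches a position in which one of the players wins.
   Context: Formulae of the modal $\mu$-calculus over a set $\Phi$ of proposition symbols and a set $\Lambda$ of label symbols: $\varphi ::= p \mid \neg p \mid X \mid \varphi\vee\varphi \mid \varphi\wedge\varphi \mid \Diamond\varphi \mid \Box\varphi \mid \mu X\varphi \mid \nu X\varphi$ with $p\in\Phi$, $X\in\Lambda$. $\mathrm{Sub}(\varphi)$ is the set of nodes (occurrences) of the syntax tree of $\varphi$; $\mathrm{Sub}_{\mu\nu}(\varphi)$ is the set of those occurrences of the form $\mu X\psi$ or $\nu X\psi$. A label occurrence $X$ is free if it is not inside any subformula $\mu X\psi$ or $\nu X\psi$; a sentence has no free label occurrences. For an occurrence $X$ in a sentence $\varphi_0$, its reference formula $\mathrm{rf}(X)$ is the nearest ancestor of that occurrence in the syntax tree of the form $\mu X\psi$ or $\nu X\psi$ (same label $X$). A Kripke model is $\mathcal{M}=(W,R,V)$ with $W\neq\emptyset$, $R\subseteq W\times W$, $V:\Phi\to\mathcal{P}(W)$. The $\Gamma$-bounded evaluation game $(\mathcal{M},w_0,\varphi_0,\Gamma)$ is played by Eloise and Abelard. Positions are $(w,\varphi,c)$ with $w\in W$, $\varphi\in\mathrm{Sub}(\varphi_0)$ and $c:\mathrm{Sub}_{\mu\nu}(\varphi_0)\to\{\gamma\mid\gamma\le\Gamma\}$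 a clock mapping. The initial position is $(w_0,\varphi_0,c_0)$ with $c_0(\theta)=\Gamma$ for all $\theta$. Rules: at $(w,p,c)$ Eloise wins iff $w\in V(p)$, else Abelard wins; at $(w,\neg p,c)$ Eloise wins iff $w\notin V(p)$, else Abelard wins; at $(w,\psi\vee\theta,c)$ Eloise chooses the next position $(w,\psi,c)$ or $(w,\theta,c)$; at $(w,\psi\wedge\theta,c)$ Abelard chooses likewise; at $(w,\Diamond\psi,c)$ Eloise chooses $v$ with $wRv$ and play moves to $(v,\psi,c)$, and Abelard wins if no such $v$ exists; at $(w,\Box\psi,c)$ Abelard chooses $v$ with $wRv$ and play moves to $(v,\psi,c)$, and Eloise wins if no such $v$ exists; at $(w,\mu X\psi,c)$ Eloise chooses an ordinal $\gamma<\Gamma$ and play moves to $(w,\psi,c[\gamma/\mu X\psi])$ (where $c[\gamma/\theta]$ agrees with $c$ except that it sends $\theta$ to $\gamma$); at $(w,\nu X\psi,c)$ Abelard chooses $\gamma<\Gamma$ and play moves to $(w,\psi,c[\gamma/\nu X\psi])$. At $(w,X,c)$, let $\gamma=c(\mathrm{rf}(X))$. If $\mathrm{rf}(X)=\mu X\psi$: if $\gamma=0$ Abelard wins; otherwise Eloise chooses $\gamma'<\gamma$ and play moves to $(w,\psi,c')$ where $c'(\mu X\psi)=\gamma'$, $c'(\theta)=\Gamma$ for every $\theta\in\mathrm{Sub}_{\mu\nu}(\varphi_0)$ lying inside $\psi$, and $c'(\theta)=c(\theta)$ otherwise. If $\mathrm{rf}(X)=\nu X\psi$: the same with roles swapped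 (if $\gamma=0$ Eloise wins; otherwise Abelard chooses $\gamma'<\gamma$, with the same update of the clock mapping). Each application of a rule is one round. *)

(* Defs.v *)
From mathcomp Require Import all_boot.
Set Implicit Arguments. Unset Strict Implicit. Unset Printing Implicit Defensive.

(* Formulae of the modal mu-calculus; P = proposition symbols (Phi),
   L = label symbols (Lambda, needs decidable equality). *)
Inductive form (P : Type) (L : eqType) : Type :=
  | FProp of P
  | FNProp of P
  | FVar of L
  | FOr of form P L & form P L
  | FAnd of form P L & form P L
  | FDia of form P L
  | FBox of form P L
  | FMu of L & form P L
  | FNu of L & form P L.

Arguments FProp {P L}. Arguments FNProp {P L}. Arguments FVar {P L}.
Arguments FOr {P L}. Arguments FAnd {P L}. Arguments FDia {P L}.
Arguments FBox {P L}. Arguments FMu {P L}. Arguments FNu {P L}.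

(* Occurrences (nodes of the syntax tree) are addresses: the sequence of
   child indices (0 = first/only child, 1 = second child) from the root. *)
Definition addr := seq nat.

Fixpoint subf (P : Type) (L : eqType) (phi : form P L) (a : addr)
  : option (form P L) :=
  match a with
  | [::] => Some phi
  | i :: a' =>
    match phi, i with
    | FOr f _, 0 | FAnd f _, 0 => subf f a'
    | FOr _ g, 1 | FAnd _ g, 1 => subf g a'
    | FDia f, 0 | FBox f, 0 | FMu _ f, 0 | FNu _ f, 0 => subf f a'
    | _, _ => None
    end
  end.

Definition binder_label (P : Type) (L : eqType) (o : option (form P L))
  : option L :=
  match o with
  | Some (FMu X _) | Some (FNu X _) => Some X
  | _ => None
  end.

Definition is_fixnode (P : Type) (L : eqType) (phi0 : form P L) (t : addr)
  : bool := binder_label (subf phi0 t) != None.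

(* Reference formula of the occurrence of label X at address a in phi0:
   the nearest (longest) proper prefix of a whose node is mu X _ or nu X _. *)
Definition rf (P : Type) (L : eqType) (phi0 : form P L) (a : addr) (X : L)
  : option addr :=
  last None [seq Some b | b <- [seq take i a | i <- iota 0 (size a)]
                        & binder_label (subf phi0 b) == Some X].

Definition sentence (P : Type) (L : eqType) (phi0 : form P L) : Prop :=
  forall (a : addr) (X : L), subf phi0 a = Some (FVar X) -> rf phi0 a X <> None.

(* Ordinals: the ordinals are represented by an arbitrary type O with a
   strict well-founded total order lt. *)
Definition is_ordinal_order (O : Type) (lt : O -> O -> Prop) : Prop :=
  well_founded lt /\
  (forall x y z, lt x y -> lt y z -> lt x z) /\
  (forall x y, lt x y \/ x = y \/ lt y x).

(* Positions (w, phi, c): phi given by its address in phi0; the clock mapping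
   c is a function on addresses, only its values on Sub_{mu nu}(phi0) matter. *)
Definition position (W O : Type) : Type := (W * addr * (addr -> O))%type.

Definition initial_position (W O : Type) (w0 : W) (Gamma : O) : position W O :=
  (w0, [::], fun _ => Gamma).

(* One round of the Gamma-bounded evaluation game: p --> q is a legal move
   (of whichever player is to move at p).  Winning/terminal positions have
   no successors. *)
Definition game_move (P : Type) (L : eqType) (W : Type) (R : W -> W -> Prop)
  (O : Type) (lt : O -> O -> Prop) (phi0 : form P L) (Gamma : O)
  (p q : position W O) : Prop :=
  let: (w, a, c) := p in
  let: (w', a', c') := q in
  match subf phi0 a with
  | Some (FOr _ _) | Some (FAnd _ _) =>
      w' = w /\ (a' = rcons a 0 \/ a' = rcons a 1) /\ c' = c
  | Some (FDia _) | Some (FBox _) =>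
      R w w' /\ a' = rcons a 0 /\ c' = c
  | Some (FMu _ _) | Some (FNu _ _) =>
      w' = w /\ a' = rcons a 0 /\
      exists g, lt g Gamma /\ c' = (fun t => if t == a then g else c t)
  | Some (FVar X) =>
      match rf phi0 a X with
      | Some b =>
          exists g', lt g' (c b) /\ w' = w /\ a' = rcons b 0 /\
            c' = (fun t => if t == b then g'
                           else if is_fixnode phi0 t && prefix (rcons b 0) t
                                then Gamma else c t)
      | None => False
      end
  | _ => False
  end.

(* Main.v *)
Require Import Defs.
From mathcomp Require Import all_boot.

Inductive ent (O : Type) := E of O | Mid | Top.
Arguments E {O}. Arguments Mid {O}. Arguments Top {O}.

Definition entlt {O : Type} (lt : O -> O -> Prop) (x y : ent O) : Prop :=
  match x, y with
  | E a, E b => lt a b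
  | E _, Mid => True
  | E _, Top => True
  | Mid, Top => True
  | _, _ => False
  end.

Fixpoint lexlt {T : Type} (r : T -> T -> Prop) (s t : seq T) : Prop :=
  match s, t with
  | x :: s', y :: t' => (r x y /\ size s' = size t') \/ (x = y /\ lexlt r s' t')
  | _, _ => False
  end.

Lemma entlt_wf (O : Type) (lt : O -> O -> Prop) : well_founded lt ->
  well_founded (entlt lt).
Proof.
move=> wf.
have hE : forall o, Acc (entlt lt) (E o).
  move=> o; elim: (wf o) => o' _ IH; constructor => y.
  case: y => [b| |] /= H; [exact: IH | case: H | case: H].
have hM : Acc (entlt lt) Mid.
  constructor => y; case: y => [b| |] /= H; [exact: hE | case: H | case: H].
move=> x; case: x => [o| |]; [exact: hE | exact: hM |].
constructor => y; case: y => [b| |] /= H; [exact: hE | exact: hM | case: H].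
Qed.

Lemma lexlt_size (T : Type) (r : T -> T -> Prop) s t :
  lexlt r s t -> size s = size t.
Proof.
elim: s t => [|x s IH] [|y t] /=; try by [].
by case=> [[_ ->]|[_ H]]; [|rewrite (IH _ H)].
Qed.

Arguments lexlt_size {T r s t}.

Lemma lexlt_wf (T : Type) (r : T -> T -> Prop) : well_founded r ->
  well_founded (lexlt r).
Proof.
move=> wf.
suff: forall n s, size s = n -> Acc (lexlt r) s by move=> H s; exact: (H _ s erefl).
elim=> [|n IHn] s.
- case: s => [|a s] /= Hs; last by [].
  constructor => t; case: t => [|y t] /= H; case: H.
- case: s => [|a s1]; first by [].
  move=> /= [Hs].
  elim: (wf a) s1 Hs => a' _ IHx s Hs.
  have As : Acc (lexlt r) s by exact: IHn.
  elim: As Hs => s' _ IHs Hs.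
  constructor => t; case: t => [|y t] /= H; first by case: H.
  case: H => [[Hyx Ht]|[Hy Ht]].
  + apply: (IHx y Hyx); by rewrite Ht.
  + rewrite Hy; apply: (IHs t Ht); by rewrite (lexlt_size Ht).
Qed.

From mathcomp Require Import zify.

Fixpoint height {P : Type} {L : eqType} (f : form P L) : nat :=
  match f with
  | FOr f g | FAnd f g => (maxn (height f) (height g)).+1
  | FDia f | FBox f | FMu _ f | FNu _ f => (height f).+1
  | _ => 0
  end.

Lemma subf_size (P : Type) (L : eqType) (phi : form P L) a psi :
  subf phi a = Some psi -> size a <= height phi.
Proof.
elim: a phi => [|i a IH] phi //=.
case: phi => [p|p|X|f g|f g|f|f|X f|X f]; case: i => [|[|i]] //= H;
  have := IH _ H; lia.
Qed.

Lemma last_map_some (T : eqType) (s : seq T) x b :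
  last x [seq Some y | y <- s] = Some b -> x = Some b \/ b \in s.
Proof.
elim: s x => [|y s IH] x /=; first by left.
move=> /IH [[->]|H]; right; rewrite in_cons; [by rewrite eqxx | by rewrite H orbT].
Qed.

Lemma rf_spec (P : Type) (L : eqType) (phi0 : form P L) a X b :
  rf phi0 a X = Some b ->
  exists k, k < size a /\ b = take k a /\ binder_label (subf phi0 b) = Some X.
Proof.
rewrite /rf => /last_map_some [//|].
rewrite mem_filter => /andP [/eqP HX /mapP [i Hi Hb]].
exists i; split; last by rewrite -Hb.
by move: Hi; rewrite mem_iota.
Qed.

Definition ent_of {P : Type} {L : eqType} {O : Type} (phi0 : form P L)
  (a : addr) (c : addr -> O) (i : nat) : ent O :=
  if i < size a then
    (if is_fixnode phi0 (take i a) then E (c (take i a)) else Mid)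
  else Top.

Lemma lex_of_fun (O : Type) (lt : O -> O -> Prop) (f g : nat -> ent O) n m k :
  m <= k < m + n -> (forall i, i < k -> f i = g i) -> entlt lt (f k) (g k) ->
  lexlt (entlt lt) (map f (iota m n)) (map g (iota m n)).
Proof.
elim: n m => [|n IH] m; first by rewrite addn0; lia.
move=> Hk Heq Hlt /=.
have [Ek|Hne] := eqVneq k m.
  by left; split; [rewrite -Ek | rewrite !size_map].
right; split.
  apply: Heq; lia.
apply: IH => //; lia.
Qed.

Lemma take_rcons_lt (T : Type) (a : seq T) j i :
  i < (size a).+1 -> take i (rcons a j) = take i a.
Proof.
move=> H; rewrite -cats1 take_cat.
case: ltnP => H2 //.
have -> : i = size a by lia.
by rewrite subnn take0 cats0 take_size.
Qed.

Lemma move_dec (P : Type) (L : eqType) (W : Type) (R : W -> W -> Prop)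
  (O : Type) (lt : O -> O -> Prop) (phi0 : form P L) (Gamma : O)
  (w : W) a c (w' : W) a' c' :
  game_move R lt phi0 Gamma (w, a, c) (w', a', c') ->
  exists k, k < (height phi0).+1 /\
    (forall i, i < k -> ent_of phi0 a' c' i = ent_of phi0 a c i) /\
    entlt lt (ent_of phi0 a' c' k) (ent_of phi0 a c k).
Proof.
rewrite /game_move.
case Ef: (subf phi0 a) => [f|]; last by [].
have Hsz := subf_size _ _ _ _ _ Ef.
have descent : forall j (c2 : addr -> O),
    (forall t, size t < size a -> c2 t = c t) ->
    exists k, k < (height phi0).+1 /\
    (forall i, i < k -> ent_of phi0 (rcons a j) c2 i = ent_of phi0 a c i) /\
    entlt lt (ent_of phi0 (rcons a j) c2 k) (ent_of phi0 a c k).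
  move=> j c2 Hc2; exists (size a); split; first lia.
  split.
    move=> i Hi; rewrite /ent_of size_rcons Hi.
    have -> : i < (size a).+1 by lia.
    rewrite take_rcons_lt; last lia.
    rewrite Hc2 // size_takel //; lia.
  rewrite /ent_of size_rcons ltnSn ltnn take_rcons_lt // take_size.
  by case: ifP.
case: f Ef => [p|p|X|f g|f g|f|f|X f|X f] Ef //.
- case Erf: (rf phi0 a X) => [b|]; last by [].
  move=> [g' [Hg' [_ [-> ->]]]].
  have [k [Hk [Hb HX]]] := rf_spec _ _ _ _ _ _ Erf.
  have Hsb : size b = k by rewrite Hb size_takel //; lia.
  exists k; split; first lia.
  split.
    move=> i Hi; rewrite /ent_of size_rcons (ltn_trans Hi Hk).
    have -> : i < (size b).+1 by lia.
    rewrite take_rcons_lt; last lia.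
    have Hti : take i b = take i a by rewrite Hb take_takel //; lia.
    rewrite Hti.
    have -> : (take i a == b) = false.
      apply/negbTE/eqP => E1; have := f_equal size E1; rewrite size_takel; last exact: (ltnW (ltn_trans Hi Hk)).
      move=> E2; suff : i = k by lia.
      by rewrite E2; exact: Hsb.
    case: ifP => // Hf; case: ifP => // /andP [_ Hp]; exfalso.
    move: (size_prefix Hp); rewrite size_rcons size_takel; last exact: (ltnW (ltn_trans Hi Hk)).
    move=> E2; have E3 : k.+1 <= i by rewrite -Hsb; exact: E2.
    lia.
  have T2 : k < (size b).+1 by rewrite Hsb.
  have T1 : take k (rcons b 0) = b.
    rewrite take_rcons_lt // -Hsb; exact: take_size.
  rewrite /ent_of size_rcons Hk T2 T1 -Hb.
  rewrite eqxx /is_fixnode HX /=.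
  exact: Hg'.
- move=> [_ [[->|->] ->]]; by apply: descent.
- move=> [_ [[->|->] ->]]; by apply: descent.
- move=> [_ [-> ->]]; by apply: descent.
- move=> [_ [-> ->]]; by apply: descent.
- move=> [_ [-> [g [_ ->]]]]; apply: descent => t Ht.
  case: eqP => // E1; move: Ht; rewrite E1; lia.
- move=> [_ [-> [g [_ ->]]]]; apply: descent => t Ht.
  case: eqP => // E1; move: Ht; rewrite E1; lia.
Qed.

Arguments move_dec {P L W R O lt phi0 Gamma w a c w' a' c'}.

Theorem proposition1 (P : Type) (L : eqType)
  (W : Type) (R : W -> W -> Prop) (V : P -> W -> Prop) (w0 : W)
  (phi0 : form P L) (O : Type) (lt : O -> O -> Prop) (Gamma : O) :
  is_ordinal_order lt ->
  sentence phi0 ->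
  ~ (exists play : nat -> position W O,
        play 0 = initial_position w0 Gamma /\
        forall n, game_move R lt phi0 Gamma (play n) (play n.+1)).
Proof.
move=> [wf _] _ [play [_ Hplay]].
pose D := (height phi0).+1.
pose vec (p : position W O) :=
  let: (w, a, c) := p in map (ent_of phi0 a c) (iota 0 D).
have Hdec : forall n, lexlt (entlt lt) (vec (play n.+1)) (vec (play n)).
  move=> n; have := Hplay n.
  case: (play n) => [[w a] c]; case: (play n.+1) => [[w' a'] c'] /=.
  move=> /move_dec [k [Hk [Heq Hlt]]].
  apply: (@lex_of_fun O lt _ _ D 0 k) => //; lia.
have Hwf := lexlt_wf _ _ (entlt_wf _ _ wf).
suff : forall x, Acc (lexlt (entlt lt)) x -> forall n, vec (play n) = x -> False.
  by move=> H; apply: (H _ (Hwf (vec (play 0))) 0).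
move=> x Ax; elim: Ax => x0 _ IH n Hn.
apply: (IH (vec (play n.+1))); last by reflexivity.
by rewrite -Hn.
Qed.
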